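(* Let $X$ and $Y$ be finite-dimensional real normed spaces and let $P:X\to Y$ be a mapping. Then $P$ is piecewise affine if and only if for every polyhedral partial order $\preceq$ on $Y$ both the $\preceq$-epigraph $\mathrm{epi}_\preceq P:=\{(x,y)\in X\times Y\mid P(x)\preceq y\}$ and the $\preceq$-hypograph $\mathrm{hyp}_\preceq P:=\{(x,y)\in X\times Y\mid y\preceq P(x)\}$ are polyhedral subsets of $X\times Y$.
   Context: A closed halfspace of a finite-dimensional space $Z$ is a set $\{z\in Z\mid a^*(z)\le\alpha\}$ with $a^*$ a nonzero linear functional and $\alpha\in\mathbb{R}$. A convex polyhedral set is an intersection of finitely many closed halfspaces (the whole space counts as convex polyhedral). A (not necessarily convex) set is polyhedral if it is the union of finitely many convex polyhedral sets. A polyhedral covering of a polyhedral set $Q$ is a finite family $\{M_1,\dots,M_k\}$ of convex polyhedral sets with $M_i\subset Q$ and $\bigcup_i M_i=Q$. A mapping $P:X\to Y$ is piecewise affine if there exist a polyhedral covering $\{M_1,\dots,M_k\}$ of $X$ and affine mappings $A_i:X\to Y$ (a linear mapping plus a constant) with $P(x)=A_i(x)$ for all $x\in M_i$, $i=1,\dots,k$. A partial order $\preceq$ on $Y$ is polyhedral if it is compatible with the vector operations (i.e. $y\preceq y'$ implies $y+z\preceq y'+z$ and $\lambda y\preceq\lambda y'$ for $\lambda\ge0$) and its positive cone $\{y\in Y\mid 0\preceq y\}$ is a convex polyhedral set. *)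

(* Defs.v *)
From HB Require Import structures.
From mathcomp Require Import all_boot all_order all_algebra.
From mathcomp Require Import reals.
Set Implicit Arguments. Unset Strict Implicit. Unset Printing Implicit Defensive.
Import Order.TTheory GRing.Theory Num.Theory.
Local Open Scope ring_scope.

Section Polyhedral.
Variable R : realType.

Definition is_linear (U V : lmodType R) (f : U -> V) : Prop :=
  forall (a : R) (u v : U), f (a *: u + v) = a *: f u + f v.

Definition is_linear_functional (U : lmodType R) (f : U -> R) : Prop :=
  forall (a : R) (u v : U), f (a *: u + v) = a * f u + f v.

Definition closed_halfspace (U : lmodType R) (H : U -> Prop) : Prop :=
  exists (f : U -> R) (alpha : R),
    is_linear_functional f /\ (exists z, f z != 0) /\
    (forall z, H z <-> f z <= alpha).

Definition convex_polyhedral (U : lmodType R) (Q : U -> Prop) : Prop :=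
  exists (n : nat) (H : 'I_n -> U -> Prop),
    (forall i, closed_halfspace (H i)) /\
    (forall z, Q z <-> forall i, H i z).

Definition polyhedral (U : lmodType R) (Q : U -> Prop) : Prop :=
  exists (n : nat) (M : 'I_n -> U -> Prop),
    (forall i, convex_polyhedral (M i)) /\
    (forall z, Q z <-> exists i, M i z).

Definition is_affine (U V : lmodType R) (A : U -> V) : Prop :=
  exists (L : U -> V) (c : V), is_linear L /\ forall x, A x = L x + c.

Definition piecewise_affine (U V : lmodType R) (P : U -> V) : Prop :=
  exists (k : nat) (M : 'I_k -> U -> Prop) (A : 'I_k -> U -> V),
    (forall i, convex_polyhedral (M i)) /\
    (forall x, exists i, M i x) /\
    (forall i, is_affine (A i)) /\
    (forall i x, M i x -> P x = A i x).

Definition polyhedral_order (V : lmodType R) (le : V -> V -> Prop) : Prop :=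
  (forall y, le y y) /\
  (forall y y', le y y' -> le y' y -> y = y') /\
  (forall y y' y'', le y y' -> le y' y'' -> le y y'') /\
  (forall y y' z, le y y' -> le (y + z) (y' + z)) /\
  (forall (l : R) y y', 0 <= l -> le y y' -> le (l *: y) (l *: y')) /\
  convex_polyhedral (fun y => le 0 y).

Definition epigraph (U V : lmodType R) (le : V -> V -> Prop) (P : U -> V)
  : U * V -> Prop := fun p => le (P p.1) p.2.

Definition hypograph (U V : lmodType R) (le : V -> V -> Prop) (P : U -> V)
  : U * V -> Prop := fun p => le p.2 (P p.1).

End Polyhedral.

(* Main.v *)
Require Import Defs.
From HB Require Import structures.
From mathcomp Require Import all_boot all_order all_algebra.
From mathcomp Require Import reals boolp ring lra.
Import Order.TTheory GRing.Theory Num.Theory.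
Local Open Scope ring_scope.
Set Implicit Arguments. Unset Strict Implicit.

Section Aux.
Variable R : realType.

Lemma lfD (U : lmodType R) (f : U -> R) : is_linear_functional f ->
  forall u v, f (u + v) = f u + f v.
Proof. by move=> H u v; rewrite -[u in LHS]scale1r H mul1r. Qed.

Lemma lf0 (U : lmodType R) (f : U -> R) : is_linear_functional f -> f 0 = 0.
Proof. move=> H; have := lfD H 0 0; rewrite addr0 => E.
by apply: (addrI (f 0)); rewrite addr0 -E. Qed.

Lemma lfZ (U : lmodType R) (f : U -> R) : is_linear_functional f ->
  forall a u, f (a *: u) = a * f u.
Proof. by move=> H a u; rewrite -[a *: u]addr0 H lf0 // addr0. Qed.

Lemma lfN (U : lmodType R) (f : U -> R) : is_linear_functional f ->
  is_linear_functional (fun z => - f z).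
Proof. by move=> H a u v; rewrite H opprD mulrN. Qed.

Lemma linD (U V : lmodType R) (f : U -> V) : is_linear f ->
  forall u v, f (u + v) = f u + f v.
Proof. by move=> H u v; rewrite -[u in LHS]scale1r H scale1r. Qed.

Lemma lin0 (U V : lmodType R) (f : U -> V) : is_linear f -> f 0 = 0.
Proof. move=> H; have := linD H 0 0; rewrite addr0 => E.
by apply: (addrI (f 0)); rewrite addr0 -E. Qed.

Lemma lf_comp (U V : lmodType R) (L : U -> V) (f : V -> R) :
  is_linear L -> is_linear_functional f -> is_linear_functional (fun z => f (L z)).
Proof. by move=> HL Hf a u v; rewrite HL Hf. Qed.

Lemma forall_ordS n (P : 'I_n.+1 -> Prop) :
  (forall i, P i) <-> (forall j : 'I_n, P (lift ord_max j)) /\ P ord_max.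
Proof.
split=> [H|[H1 H2] i]; first by split.
by case: (unliftP ord_max i) => [j ->|->].
Qed.

Definition cpp (U : lmodType R) (Q : U -> Prop) :=
  exists n (f : 'I_n -> U -> R) (a : 'I_n -> R),
    (forall i, is_linear_functional (f i)) /\ forall z, Q z <-> forall i, f i z <= a i.

Lemma cpp_ext (U : lmodType R) (Q Q' : U -> Prop) :
  cpp Q -> (forall z, Q z <-> Q' z) -> cpp Q'.
Proof.
move=> [n [f [a [Hl HQ]]]] E; exists n, f, a; split=> // z.
by rewrite -E.
Qed.

Lemma cpp_T (U : lmodType R) : cpp (fun _ : U => True).
Proof.
exists 0%N, (fun _ _ => 0), (fun _ => 0); split.
  by move=> [].
by move=> z; split=> // _ [].
Qed.

Lemma cpp_cap1 (U : lmodType R) (Q : U -> Prop) f a :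
  cpp Q -> is_linear_functional f -> cpp (fun z => Q z /\ f z <= a).
Proof.
move=> [n [g [b [Hl HQ]]]] Hf.
exists n.+1, (fun i => if unlift ord_max i is Some j then g j else f),
  (fun i => if unlift ord_max i is Some j then b j else a); split.
  by move=> i; case: (unlift ord_max i).
move=> z; rewrite HQ forall_ordS unlift_none.
by split; move=> [H1 H2]; split=> // j; have := H1 j; rewrite liftK.
Qed.

Lemma cpp_cap (U : lmodType R) (Q1 Q2 : U -> Prop) :
  cpp Q1 -> cpp Q2 -> cpp (fun z => Q1 z /\ Q2 z).
Proof.
move=> H1 [n [f [a [Hl HQ]]]].
apply: (@cpp_ext _ (fun z => Q1 z /\ forall i, f i z <= a i)); last first.
  by move=> z; rewrite HQ.
elim: n f a {HQ} Hl => [|n IH] f a Hl.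
  by apply: cpp_ext H1 _ => z; split=> [H|[]//]; split=> // [[]].
have := IH (fun j => f (lift ord_max j)) (fun j => a (lift ord_max j)) (fun j => Hl _).
move=> /(cpp_cap1 (a ord_max)) /(_ (Hl ord_max)) H.
by apply: cpp_ext H _ => z; rewrite forall_ordS; tauto.
Qed.

Lemma cpp_capn (U : lmodType R) n (Q : 'I_n -> U -> Prop) :
  (forall i, cpp (Q i)) -> cpp (fun z => forall i, Q i z).
Proof.
elim: n Q => [|n IH] Q HQ.
  by apply: cpp_ext (cpp_T U) _ => z; split=> // _ [].
have := cpp_cap (IH (fun j => Q (lift ord_max j)) (fun j => HQ _)) (HQ ord_max).
by move=> H; apply: cpp_ext H _ => z; rewrite forall_ordS.
Qed.

Lemma cp_cpp (U : lmodType R) (Q : U -> Prop) : convex_polyhedral Q -> cpp Q.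
Proof.
move=> [n [H [HH HQ]]].
apply: cpp_ext (cpp_capn (Q := H) _) _ => [i|z]; last by rewrite HQ.
have [f [a [Hf [_ E]]]] := HH i.
by apply: cpp_ext (cpp_cap1 a (cpp_T U) Hf) _ => z; rewrite E; tauto.
Qed.

Lemma cp_ext (U : lmodType R) (Q Q' : U -> Prop) :
  convex_polyhedral Q -> (forall z, Q z <-> Q' z) -> convex_polyhedral Q'.
Proof.
move=> [n [f [Hl HQ]]] E; exists n, f; split=> // z.
by rewrite -E.
Qed.

Lemma cp_T (U : lmodType R) : convex_polyhedral (fun _ : U => True).
Proof.
exists 0%N, (fun _ _ => True); split; first by move=> [].
by move=> z; split=> // _ [].
Qed.

Lemma cp_addH (U : lmodType R) (Q H : U -> Prop) :
  convex_polyhedral Q -> closed_halfspace H -> convex_polyhedral (fun z => Q z /\ H z).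
Proof.
move=> [n [G [HG HQ]]] HH.
exists n.+1, (fun i => if unlift ord_max i is Some j then G j else H); split.
  by move=> i; case: (unlift ord_max i).
move=> z; rewrite HQ forall_ordS unlift_none.
by split; move=> [H1 H2]; split=> // j; have := H1 j; rewrite liftK.
Qed.

Definition nontriv (U : lmodType R) :=
  exists g : U -> R, is_linear_functional g /\ exists z, g z != 0.

Lemma cp_cap1 (U : lmodType R) (Q : U -> Prop) f a : nontriv U ->
  convex_polyhedral Q -> is_linear_functional f ->
  convex_polyhedral (fun z => Q z /\ f z <= a).
Proof.
move=> [g [Hg [z0 Hz0]]] HQ Hf.
case: (pselect (exists z, f z != 0)) => [Hnz|Hz].
  by apply: cp_addH => //; exists f, a; split=> //; split.
have f0 : forall z, f z = 0.
  by move=> z; case: (f z =P 0) => // H; exfalso; apply: Hz; exists z; apply/eqP.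
case: (lerP 0 a) => Ha.
  by apply: cp_ext HQ _ => z; rewrite f0; tauto.
have H1 : closed_halfspace (fun z => g z <= 0).
  by exists g, 0; split=> //; split=> //; exists z0.
have H2 : closed_halfspace (fun z => - g z <= -1).
  exists (fun z => - g z), (-1); split; first exact: lfN.
  by split=> //; exists z0; rewrite oppr_eq0.
apply: cp_ext (cp_addH (cp_addH (cp_T U) H1) H2) _ => z.
rewrite f0; split=> [[[_ A] B]|[_ B]]; last by exfalso; move: B Ha => /le_lt_trans H /H; rewrite ltxx.
by exfalso; move: A B; rewrite lerNl opprK => A B; have := le_trans B A; rewrite ler10.
Qed.

Lemma cpp_cp (U : lmodType R) (Q : U -> Prop) : nontriv U -> cpp Q -> convex_polyhedral Q.
Proof.
move=> Hn [n [f [a [Hl HQ]]]].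
apply: (@cp_ext _ (fun z => forall i, f i z <= a i)); last by move=> z; rewrite HQ.
elim: n f a {HQ} Hl => [|n IH] f a Hl.
  by apply: cp_ext (cp_T U) _ => z; split=> // _ [].
have := IH (fun j => f (lift ord_max j)) (fun j => a (lift ord_max j)) (fun j => Hl _).
move=> /(cp_cap1 (a ord_max) Hn) /(_ (Hl ord_max)) H.
by apply: cp_ext H _ => z; rewrite forall_ordS.
Qed.

Lemma cpp_pre (U V : lmodType R) (L : U -> V) (c : V) (Q : V -> Prop) :
  is_linear L -> cpp Q -> cpp (fun z => Q (L z + c)).
Proof.
move=> HL [n [f [a [Hl HQ]]]].
exists n, (fun i z => f i (L z)), (fun i => a i - f i c); split.
  by move=> i; apply: lf_comp.
move=> z; rewrite HQ; split=> H i; have := H i; rewrite (lfD (Hl i)).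
  by rewrite lerBrDr.
by rewrite lerBrDr.
Qed.

Definition convex (U : lmodType R) (C : U -> Prop) :=
  forall z z' (t : R), 0 <= t -> t <= 1 -> C z -> C z' -> C (t *: z + (1 - t) *: z').

Lemma cpp_convex (U : lmodType R) (C : U -> Prop) : cpp C -> convex C.
Proof.
move=> [n [f [a [Hl HQ]]]] z z' t t0 t1; rewrite !HQ => H1 H2 i.
rewrite (lfD (Hl i)) !(lfZ (Hl i)).
have := H1 i; have := H2 i; nra.
Qed.

Lemma poly_triv (U : lmodType R) (Q : U -> Prop) : (forall z : U, z = 0) -> polyhedral Q.
Proof.
move=> Z; case: (pselect (Q 0)) => H.
  exists 1%N, (fun _ _ => True); split; first by move=> _; apply: cp_T.
  by move=> z; rewrite (Z z); split=> // _; exists ord0.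
exists 0%N, (fun _ _ => True); split; first by move=> [].
by move=> z; rewrite (Z z); split=> // [[[]]].
Qed.

End Aux.
Section Vect.
Variable R : realType.

Lemma coord_lf (X : vectType R) n (t : n.-tuple X) i : is_linear_functional (coord t i).
Proof. by move=> a u v; rewrite linearP. Qed.

Lemma coord_all0 (X : vectType R) (x : X) :
  (forall i, coord (vbasis fullv) i x = 0) -> x = 0.
Proof.
move=> H; rewrite (coord_vbasis (memvf x)).
by apply: big1 => i _; rewrite H scale0r.
Qed.

Lemma vect_dich (X : vectType R) : nontriv X \/ forall x : X, x = 0.
Proof.
case: (pselect (exists x : X, x != 0)) => [[x Hx]|H]; last first.
  by right=> x; case: (x =P 0) => // /eqP Hx; exfalso; apply: H; exists x.
left; case: (pselect (exists i, coord (vbasis fullv) i x != 0)) => [[i Hi]|Hn].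
  by exists (coord (vbasis fullv) i); split; [apply: coord_lf| exists x].
exfalso; move/eqP: Hx; apply; apply: coord_all0 => i.
by case: (coord (vbasis fullv) i x =P 0) => // /eqP Hi; exfalso; apply: Hn; exists i.
Qed.

Lemma pair_dich (X Y : vectType R) : nontriv (X * Y)%type \/ forall z : X * Y, z = 0.
Proof.
case: (vect_dich X) => [[g [Hg [x Hx]]]|HX].
  left; exists (fun z => g z.1); split; last by exists (x, 0).
  by move=> a u v; apply: Hg.
case: (vect_dich Y) => [[g [Hg [y Hy]]]|HY].
  left; exists (fun z => g z.2); split; last by exists (0, y).
  by move=> a u v; apply: Hg.
by right=> [[x y]]; rewrite (HX x) (HY y).
Qed.

Lemma cpp_zero (Y : vectType R) : cpp (fun y : Y => 0 = y).
Proof.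
have H : cpp (fun y : Y => forall i, coord (vbasis fullv) i y <= 0 /\ - coord (vbasis fullv) i y <= 0).
  apply: cpp_capn => i.
  have H1 := cpp_cap1 0 (cpp_T Y) (coord_lf (vbasis fullv) i).
  have H2 := cpp_cap1 0 (cpp_T Y) (lfN (coord_lf (vbasis fullv) i)).
  by apply: cpp_ext (cpp_cap H1 H2) _ => z /=; tauto.
apply: cpp_ext H _ => y; split.
  move=> Hy; apply/esym/coord_all0 => i; have [] := Hy i; rewrite lerNl oppr0.
  by move=> A B; apply/eqP; rewrite eq_le A B.
by move=> <- i; rewrite linear0 oppr0 lexx.
Qed.

End Vect.
Section Key.
Variable R : realType.
Variables (X Y : vectType R).
Variable C : (X * Y)%type -> Prop.
Hypothesis convC : convex C.
Hypothesis graphC : forall z z', C z -> C z' -> z.1 = z'.1 -> z.2 = z'.2.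
Variable c0 : (X * Y)%type.
Hypothesis Hc0 : C c0.

Let Dg d := C (d + c0).

Lemma Dg0 : Dg 0. Proof. by rewrite /Dg add0r. Qed.

Lemma Dg_conv u v t : 0 <= t -> t <= 1 -> Dg u -> Dg v -> Dg (t *: u + (1 - t) *: v).
Proof.
move=> t0 t1 Hu Hv; have := convC t0 t1 Hu Hv; rewrite /Dg.
by rewrite !scalerDr addrACA -scalerDl [t + _]addrC subrK scale1r.
Qed.

Lemma Dg_scale u t : 0 <= t -> t <= 1 -> Dg u -> Dg (t *: u).
Proof.
move=> t0 t1 Hu; have := Dg_conv t0 t1 Hu Dg0.
by rewrite scaler0 addr0.
Qed.

Let Sp w := exists u v t s, [/\ Dg u, Dg v, 0 <= t, 0 <= s & w = t *: u - s *: v].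

Lemma cone u u' t t' : Dg u -> Dg u' -> 0 <= t -> 0 <= t' ->
  exists T u'', [/\ 0 <= T, Dg u'' & t *: u + t' *: u' = T *: u''].
Proof.
move=> Hu Hu' t0 t0'.
case: (eqVneq (t + t') 0) => Ht.
  have e1 : t = 0 by lra.
  have e2 : t' = 0 by lra.
  exists 0, 0; split=> //; first exact: Dg0.
  by rewrite e1 e2 !scale0r addr0.
have Tp : 0 < t + t' by rewrite lt_def Ht addr_ge0.
exists (t + t'), ((t / (t + t')) *: u + (1 - t / (t + t')) *: u'); split.
- exact: ltW.
- apply: Dg_conv => //; first by rewrite divr_ge0 // addr_ge0.
  by rewrite ler_pdivrMr // mul1r lerDl.
- rewrite scalerDr !scalerA.
  have -> : (t + t') * (t / (t + t')) = t by field.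
  by have -> : (t + t') * (1 - t / (t + t')) = t' by field.
Qed.

Lemma Sp0 : Sp 0.
Proof. by exists 0, 0, 0, 0; split; rewrite ?scale0r ?subr0 //; apply: Dg0. Qed.

Lemma Sp_Dg u : Dg u -> Sp u.
Proof.
by move=> Hu; exists u, 0, 1, 0; split; rewrite ?scale1r ?scale0r ?subr0 //; apply: Dg0.
Qed.

Lemma Sp_add w w' : Sp w -> Sp w' -> Sp (w + w').
Proof.
move=> [u [v [t [s [Hu Hv t0 s0 ->]]]]] [u' [v' [t' [s' [Hu' Hv' t0' s0' ->]]]]].
have [T1 [u1 [T10 Hu1 E1]]] := cone Hu Hu' t0 t0'.
have [T2 [v2 [T20 Hv2 E2]]] := cone Hv Hv' s0 s0'.
exists u1, v2, T1, T2; split=> //.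
by rewrite -E1 -E2 opprD addrACA.
Qed.

Lemma Sp_scale a w : Sp w -> Sp (a *: w).
Proof.
move=> [u [v [t [s [Hu Hv t0 s0 ->]]]]].
case: (lerP 0 a) => Ha.
  exists u, v, (a * t), (a * s); split; rewrite ?mulr_ge0 //.
  by rewrite scalerBr !scalerA.
have na : 0 <= - a by lra.
exists v, u, (- a * s), (- a * t); split; rewrite ?mulr_ge0 //.
rewrite scalerBr !scalerA !mulNr !scaleNr opprK; exact: addrC.
Qed.

Lemma Sp_sum n (F : 'I_n -> (X * Y)%type) : (forall i, Sp (F i)) -> Sp (\sum_i F i).
Proof.
move=> H; apply: (big_ind Sp) => //; [exact: Sp0 | exact: Sp_add].
Qed.

Lemma scale_div (V : lmodType R) (r m : R) (x : V) : (r / m) *: x = m^-1 *: (r *: x).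
Proof. by rewrite scalerA mulrC. Qed.

Lemma Sp_inj w : Sp w -> w.1 = 0 -> w.2 = 0.
Proof.
move=> [u [v [t [s [Hu Hv t0 s0 ->]]]]] /= /subr0_eq H1.
case: (eqVneq (t + s) 0) => Ht.
  have e1 : t = 0 by lra.
  have e2 : s = 0 by lra.
  by rewrite e1 e2 !scale0r subr0.
have mp : 0 < t + s by rewrite lt_def Ht addr_ge0.
set m := t + s in Ht mp.
have Hp : Dg ((t / m) *: u).
  apply: Dg_scale => //; first by rewrite divr_ge0 // ltW.
  by rewrite ler_pdivrMr // mul1r /m lerDl.
have Hq : Dg ((s / m) *: v).
  apply: Dg_scale => //; first by rewrite divr_ge0 // ltW.
  by rewrite ler_pdivrMr // mul1r /m lerDr.
have := graphC Hp Hq; rewrite /= !scale_div H1 => /(_ erefl) /addIr.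
move=> /(scalerI _); rewrite invr_eq0 => /(_ Ht) ->.
by rewrite subrr.
Qed.

Lemma fst_sum n (F : 'I_n -> (X * Y)%type) : (\sum_i F i).1 = \sum_i (F i).1.
Proof. by apply: (big_morph fst) => //. Qed.

Lemma snd_sum n (F : 'I_n -> (X * Y)%type) : (\sum_i F i).2 = \sum_i (F i).2.
Proof. by apply: (big_morph snd) => //. Qed.

Lemma span_ex : exists s : seq (X * Y)%type,
  (forall w, w \in s -> Sp w) /\ forall w, Sp w -> w.1 \in <<map fst s>>%VS.
Proof.
case: (pselect (exists s : seq (X * Y)%type,
  (forall w, w \in s -> Sp w) /\ forall w, Sp w -> w.1 \in <<map fst s>>%VS)) => // Hn.
exfalso.
have Hstep : forall s : seq (X * Y)%type, (forall w, w \in s -> Sp w) ->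
    exists w, Sp w /\ w.1 \notin <<map fst s>>%VS.
  move=> s Hs; case: (pselect (exists w, Sp w /\ w.1 \notin <<map fst s>>%VS)) => // H'.
  exfalso; apply: Hn; exists s; split=> // w Hw.
  by case: (boolP (w.1 \in _)) => // Hnot; exfalso; apply: H'; exists w.
have Hk : forall k, exists s : seq (X * Y)%type,
    (forall w, w \in s -> Sp w) /\ (k <= \dim <<map fst s>>)%N.
  elim=> [|k [s [Hs Hd]]]; first by exists [::]; split.
  have [w [Hw Hnot]] := Hstep s Hs.
  exists (w :: s); split.
    by move=> w'; rewrite in_cons => /orP [/eqP ->|]; [|apply: Hs].
  rewrite /= span_cons.
  have := ltn_leqif (dimv_leqif_sup (addvSr <[w.1]>%VS <<map fst s>>%VS)).
  case: (boolP (_ <= _)%VS) => [Hsub|_] Hlt.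
    by exfalso; move/negP: Hnot; apply; apply: (subvP Hsub); apply: (subvP (addvSl _ _)); apply: memv_line.
  by apply: leq_ltn_trans Hd _; rewrite Hlt.
have [s [_ Hd]] := Hk (\dim (fullv : {vspace X})).+1.
by have := dimvS (subvf <<map fst s>>%VS); rewrite leqNgt Hd.
Qed.

Lemma key_affine_c0 : exists A : X -> Y, is_affine A /\ forall z, C z -> A z.1 = z.2.
Proof.
have [s [Hs Hspan]] := span_ex.
pose t := in_tuple (map fst s).
pose B (x : X) := \sum_(i < size (map fst s)) coord t i x *: (nth 0 s i).2.
have linB : is_linear B.
  move=> a u v; rewrite /B scaler_sumr -big_split; apply: eq_bigr => i _ /=.
  by rewrite linearP scalerDl scalerA.
have BB : forall x y, B (x - y) = B x - B y.
  by move=> x y; rewrite /B -sumrB; apply: eq_bigr => i _; rewrite linearB scalerBl.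
have claim : forall w, Sp w -> B w.1 = w.2.
  move=> w Hw.
  have Hsp := coord_span (Hspan w Hw : w.1 \in span t).
  pose w' := \sum_(i < size (map fst s)) coord t i w.1 *: nth 0 s i.
  have Hw' : Sp w'.
    apply: Sp_sum => i; apply: Sp_scale; apply: Hs; apply: mem_nth.
    by apply: (leq_trans (ltn_ord i)); rewrite size_map.
  have E1 : w'.1 = w.1.
    rewrite fst_sum [in RHS]Hsp; apply: eq_bigr => i _ /=.
    rewrite (nth_map 0) //.
    by apply: (leq_trans (ltn_ord i)); rewrite size_map.
  have Hd : Sp (w' - w) by apply: Sp_add => //; rewrite -scaleN1r; apply: Sp_scale.
  have := Sp_inj Hd; rewrite /= E1 subrr => /(_ erefl) /subr0_eq <-.
  by rewrite snd_sum.
exists (fun x => B x + (c0.2 - B c0.1)); split.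
  by exists B, (c0.2 - B c0.1).
move=> z Hz.
have Hd : Dg (z - c0) by rewrite /Dg subrK.
have := claim _ (Sp_Dg Hd); rewrite /= BB => E.
by rewrite addrCA E addrC subrK.
Qed.

End Key.

Lemma key_affine (R : realType) (X Y : vectType R) (C : (X * Y)%type -> Prop) :
  convex C -> (forall z z', C z -> C z' -> z.1 = z'.1 -> z.2 = z'.2) ->
  exists A : X -> Y, is_affine A /\ forall z, C z -> A z.1 = z.2.
Proof.
move=> convC graphC.
case: (pselect (exists c0, C c0)) => [[c0 Hc0]|Hn].
  exact: key_affine_c0 Hc0.
exists (fun _ => 0); split.
  by exists (fun _ => 0), 0; split=> [a u v|x]; rewrite ?scaler0 ?addr0.
by move=> z Hz; exfalso; apply: Hn; exists z.
Qed.

Lemma le_shift (R : realType) (Y : lmodType R) (le : Y -> Y -> Prop) :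
  polyhedral_order le -> forall a b, le a b <-> le 0 (b - a).
Proof.
move=> [_ [_ [_ [Htr _]]]] a b; split=> H.
  by have := Htr _ _ (- a) H; rewrite subrr.
by have := Htr _ _ a H; rewrite add0r subrK.
Qed.

Lemma lin_fst (R : realType) (X Y : lmodType R) : is_linear (fun z : (X * Y)%type => z.1).
Proof. by []. Qed.

Lemma forward (R : realType) (X Y : vectType R) (P : X -> Y) :
  piecewise_affine P ->
  (forall le : Y -> Y -> Prop, polyhedral_order le ->
     polyhedral (epigraph le P) /\ polyhedral (hypograph le P)).
Proof.
move=> [k [M [A [HM [Hcov [HA Hag]]]]]] le Hle.
have HK : cpp (fun y => le 0 y) by apply: cp_cpp; case: Hle => [_ [_ [_ [_ [_ H]]]]].
have HMi : forall i, cpp (fun z : (X * Y)%type => M i z.1).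
  move=> i; apply: cpp_ext (cpp_pre (0) (@lin_fst R X Y) (cp_cpp (HM i))) _.
  by move=> z; rewrite addr0.
have He : forall i, cpp (fun z : (X * Y)%type => M i z.1 /\ le 0 (z.2 - A i z.1)).
  move=> i; apply: cpp_cap => //.
  have [L [c [HL HAx]]] := HA i.
  have linL : is_linear (fun z : (X * Y)%type => z.2 - L z.1).
    by move=> a u v; rewrite /= HL scalerBr opprD addrACA.
  apply: cpp_ext (cpp_pre (- c) linL HK) _ => z.
  by rewrite HAx opprD addrA.
have Hh : forall i, cpp (fun z : (X * Y)%type => M i z.1 /\ le 0 (A i z.1 - z.2)).
  move=> i; apply: cpp_cap => //.
  have [L [c [HL HAx]]] := HA i.
  have linL : is_linear (fun z : (X * Y)%type => L z.1 - z.2).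
    by move=> a u v; rewrite /= HL scalerBr opprD addrACA.
  apply: cpp_ext (cpp_pre (c) linL HK) _ => z.
  by rewrite HAx addrAC.
case: (pair_dich X Y) => [NT|Tr]; last by split; apply: poly_triv.
split.
  exists k, (fun i (z : (X * Y)%type) => M i z.1 /\ le 0 (z.2 - A i z.1)); split.
    by move=> i; apply: cpp_cp.
  move=> z; rewrite /epigraph (le_shift Hle); split.
    by have [i Hi] := Hcov z.1; rewrite (Hag _ _ Hi) => H; exists i.
  by move=> [i [Hi H]]; rewrite (Hag _ _ Hi).
exists k, (fun i (z : (X * Y)%type) => M i z.1 /\ le 0 (A i z.1 - z.2)); split.
  by move=> i; apply: cpp_cp.
move=> z; rewrite /hypograph (le_shift Hle); split.
  by have [i Hi] := Hcov z.1; rewrite (Hag _ _ Hi) => H; exists i.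
by move=> [i [Hi H]]; rewrite (Hag _ _ Hi).
Qed.

Lemma backward (R : realType) (X Y : vectType R) (P : X -> Y) :
  (forall le : Y -> Y -> Prop, polyhedral_order le ->
     polyhedral (epigraph le P) /\ polyhedral (hypograph le P)) ->
  piecewise_affine P.
Proof.
move=> H.
have Heq : polyhedral_order (fun y y' : Y => y = y').
  split=> //; split; first by move=> y y' ->.
  split; first by move=> y y' y'' -> ->.
  split; first by move=> y y' z ->.
  split; first by move=> l y y' _ ->.
  case: (vect_dich Y) => [NY|TY]; first exact: cpp_cp NY (cpp_zero Y).
  by apply: cp_ext (cp_T Y) _ => y; rewrite (TY y).
have [[n [G [HG HGe]]] _] := H _ Heq.
case: (vect_dich X) => [NX|TX]; last first.
  exists 1%N, (fun _ _ => True), (fun _ _ => P 0); split; first by move=> _; apply: cp_T.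
  split; first by move=> x; exists ord0.
  split; last by move=> i x _; rewrite (TX x).
  by move=> i; exists (fun _ => 0), (P 0); split=> [a u v|x]; rewrite ?scaler0 ?addr0 ?add0r.
have key : forall i, exists A : X -> Y, is_affine A /\ forall z, G i z -> A z.1 = z.2.
  move=> i; apply: key_affine; first exact: cpp_convex (cp_cpp (HG i)).
  move=> z z' Hz Hz' E.
  have E1 : P z.1 = z.2 by apply/(HGe z); exists i.
  have E2 : P z'.1 = z'.2 by apply/(HGe z'); exists i.
  by rewrite -E1 -E2 E.
case: (choice key) => Af HAf.
exists n, (fun i x => G i (x, Af i x)), Af; split.
  move=> i; have [L [c [HL E]]] := (HAf i).1.
  have linL : is_linear (fun x : X => (x, L x) : (X * Y)%type).
    by move=> a u v; rewrite HL.
  apply: cpp_cp NX (cpp_ext (cpp_pre (0, c) linL (cp_cpp (HG i))) _) => x.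
  by rewrite E; have -> : ((x, L x) + (0, c) : (X * Y)%type) = (x + 0, L x + c) by []; rewrite addr0.
split.
  move=> x; have [i Hi] : exists i, G i (x, P x) by apply/(HGe (x, P x)).
  by exists i; rewrite ((HAf i).2 _ Hi).
split; first by move=> i; exact: (HAf i).1.
move=> i x Hi.
by have := (HGe (x, Af i x)).2 (ex_intro _ i Hi).
Qed.

Unset Implicit Arguments.

Theorem theorem4p2 (R : realType) (X Y : vectType R) (P : X -> Y) :
  piecewise_affine P <->
  (forall le : Y -> Y -> Prop, polyhedral_order le ->
     polyhedral (epigraph le P) /\ polyhedral (hypograph le P)).
Proof.
split; [exact: forward | exact: backward].
Qed.
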